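(* Let $0\le \ell<k$ be integers and $\gamma\ge 0$ a real number. If a $k$-graph $G$ with $m$ vertices and $e>0$ edges satisfies $\delta^+_\ell(G)\ge \gamma m^{k-\ell}/(k-\ell)!$, then $e\ge \gamma^{k/(k-\ell)} m^k/k!$.
   Context: A $k$-graph $G$ is a pair $(V(G),E(G))$ with $E(G)$ a collection of $k$-subsets of the finite set $V(G)$. The minimum positive $\ell$-degree $\delta^+_\ell(G)$ of a $k$-graph $G$ with at least one edge is the maximum $m$ such that every $\ell$-subset of $V(G)$ is contained in either no edges or at least $m$ edges of $G$. *)

(* Defs.v *)
From mathcomp Require Import all_boot all_order all_algebra.
From mathcomp Require Import reals exp.
Set Implicit Arguments. Unset Strict Implicit. Unset Printing Implicit Defensive.

Definition is_kgraph (T : finType) (k : nat) (E : {set {set T}}) : bool :=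
  [forall e in E, #|e| == k].

Definition deg (T : finType) (E : {set {set T}}) (S : {set T}) : nat :=
  #|[set e in E | S \subset e]|.

(* Minimum positive l-degree: the maximum d such that every l-subset of T
   lies in either no edge or at least d edges. Such d is at most #|E| whenever
   E has an edge (l <= k), so the max ranges over d <= #|E|. *)
Definition minposdeg (T : finType) (l : nat) (E : {set {set T}}) : nat :=
  \max_(d < #|E|.+1 | [forall S : {set T},
       (#|S| == l) ==> (deg E S == 0) || (d <= deg E S)]) d.

(* Main.v *)
Require Import Defs.
From mathcomp Require Import all_boot all_order all_algebra.
From mathcomp Require Import reals exp.
Import Order.TTheory GRing.Theory Num.Theory.
Local Open Scope ring_scope.

Lemma ffact_le_exp n m : (n ^_ m <= n ^ m)%N.
Proof.
elim: m => [|m IH] //; rewrite ffactnSr expnSr; exact: leq_mul IH (leq_subr _ _).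
Qed.

Lemma minposdeg_spec (T : finType) l (E : {set {set T}}) (S : {set T}) :
  #|S| = l -> deg E S = 0%N \/ (minposdeg l E <= deg E S)%N.
Proof.
move=> cS.
pose K (n : nat) := forall S : {set T}, #|S| == l -> (deg E S == 0%N) || (n <= deg E S)%N.
suff: K (minposdeg l E).
  move=> /(_ S); rewrite cS eqxx => /(_ isT) /orP[/eqP|]; by [left|right].
rewrite /minposdeg; apply: (big_ind K).
- by move=> S' _; rewrite leq0n orbT.
- move=> a b Ka Kb S' hS'.
  case/orP: (Ka S' hS') => [->//|ha]; case/orP: (Kb S' hS') => [->//|hb].
  by apply/orP; right; rewrite geq_max ha hb.
- by move=> i /forallP H S' hS'; move: (H S'); rewrite hS'.
Qed.

Lemma sum_deg1 (T : finType) (E : {set {set T}}) k :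
  is_kgraph k E -> (\sum_(v : T) deg E [set v] = k * #|E|)%N.
Proof.
move=> kE.
rewrite (eq_bigr (fun v => \sum_(e in E | v \in e) 1)%N); last first.
  by move=> v _; rewrite sum1_card /deg; apply: eq_card => e; rewrite !inE sub1set.
rewrite (exchange_big_dep (mem E)) /=; last by move=> i j _ /andP[].
rewrite mulnC -sum_nat_const; apply: eq_bigr => e eE.
rewrite sum1_card. move/forallP: kE => /(_ e); rewrite eE => /eqP <-.
by apply: eq_card => v.
Qed.
Lemma core (R : realType) (T : finType) (r d : nat) (x : R) :
  (0 < r)%N -> 0 <= x -> x ^+ r <= (r`! * d)%:R ->
  forall l (E : {set {set T}}), is_kgraph (l + r) E -> E != set0 ->
  (forall S : {set T}, #|S| = l -> deg E S = 0%N \/ (d <= deg E S)%N) ->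
  x ^+ (l + r) <= ((l + r)`! * #|E|)%:R.
Proof.
move=> r0 x0 hx; elim=> [|l IH] E kE En0 Hd.
  rewrite add0n; apply: le_trans hx _; rewrite ler_nat leq_mul2l; apply/orP; right.
  have dE : deg E set0 = #|E| by rewrite /deg; apply: eq_card => e; rewrite !inE sub0set andbT.
  case: (Hd set0 (cards0 _)) => h; last by rewrite -dE.
  by move: En0; rewrite -card_gt0 -dE h.
have kEe : forall e, e \in E -> #|e| = (l.+1 + r)%N.
  by move=> e eE; move/forallP: kE => /(_ e); rewrite eE => /eqP.
set U := [set v | deg E [set v] != 0%N].
have Ux : x <= #|U|%:R.
  case/set0Pn: En0 => e0 e0E.
  have : (0 < #|[set B : {set T} | B \subset e0 & #|B| == l.+1]|)%N.
    by rewrite cards_draws bin_gt0 kEe // leq_addr.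
  case/card_gt0P => S; rewrite inE => /andP[Se0 /eqP cS].
  have degS : (d <= deg E S)%N.
    case: (Hd S cS) => // h0; move/cards0_eq: h0 => h.
    have : e0 \in [set e in E | S \subset e] by rewrite inE e0E Se0.
    by rewrite h inE.
  have degU : (deg E S <= 'C(#|U|, r))%N.
    rewrite -cards_draws /deg.
    rewrite -(@card_in_imset _ _ (fun e => e :\: S) [set e in E | S \subset e]).
      apply: subset_leq_card; apply/subsetP => B /imsetP[e eD ->]; move: eD; rewrite !inE => /andP[eE Se].
      apply/andP; split.
        apply/subsetP => v; rewrite inE => /andP[_ ve]; rewrite inE /deg -lt0n card_gt0.
        by apply/set0Pn; exists e; rewrite inE eE sub1set ve.
      by rewrite cardsD (setIidPr Se) kEe // cS addKn.
    move=> e1 e2; rewrite !inE => /andP[_ S1] /andP[_ S2] /= h.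
    by rewrite -(setID e1 S) -(setID e2 S) h (setIidPr S1) (setIidPr S2).
  have : x ^+ r <= #|U|%:R ^+ r.
    apply: le_trans hx _; rewrite -natrX ler_nat.
    apply: leq_trans (leq_mul (leqnn _) (leq_trans degS degU)) _.
    by rewrite mulnC bin_ffact; exact: ffact_le_exp.
  by rewrite ler_pXn2r // nnegrE.
have Hv : forall v, v \in U -> x ^+ (l + r) <= ((l + r)`! * deg E [set v])%:R.
  move=> v vU; set Ev := [set e in E | v \in e]; set L := (fun e => e :\ v) @: Ev.
  have injL : {in Ev &, injective (fun e => e :\ v)}.
    move=> e1 e2; rewrite !inE => /andP[_ v1] /andP[_ v2] h.
    by rewrite -(setD1K v1) -(setD1K v2) h.
  have cardL : #|L| = deg E [set v].
    by rewrite card_in_imset // /deg; apply: eq_card => e; rewrite !inE sub1set.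
  rewrite -cardL; apply: IH.
  - apply/forallP => f; apply/implyP => /imsetP[e]; rewrite inE => /andP[eE ve] ->.
    by apply/eqP; have := cardsD1 v e; rewrite ve kEe // addSn add1n => -[].
  - by rewrite -card_gt0 cardL lt0n; move: vU; rewrite inE.
  - move=> S cS; rewrite /deg; case: (boolP (v \in S)) => vS.
      left; apply/eqP; rewrite cards_eq0; apply/eqP/setP => f; rewrite !inE.
      apply/negbTE/andP => -[/imsetP[e _ ->] Sf].
      by have := subsetP Sf v vS; rewrite !inE eqxx.
    have -> : [set f in L | S \subset f] = (fun e => e :\ v) @: [set e in E | v |: S \subset e].
      apply/setP => f; rewrite !inE; apply/andP/imsetP.
        case=> /imsetP[e]; rewrite inE => /andP[eE ve] -> Sf; exists e => //.
        rewrite inE eE subUset sub1set ve /=; exact: subset_trans Sf (subD1set _ _).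
      case=> e; rewrite inE => /andP[eE]; rewrite subUset sub1set => /andP[ve Se] ->; split.
        by apply: imset_f; rewrite inE eE ve.
      apply/subsetP => u uS; rewrite !inE (subsetP Se u uS) andbT.
      by apply: contraNneq vS => <-.
    rewrite card_in_imset; last first.
      move=> e1 e2; rewrite !inE => /andP[e1E h1] /andP[e2E h2]; apply: injL.
        by rewrite inE e1E; move: h1; rewrite subUset sub1set => /andP[].
      by rewrite inE e2E; move: h2; rewrite subUset sub1set => /andP[].
    by apply: Hd; rewrite cardsU1 vS cS.
rewrite addSn factS exprS.
apply: le_trans (ler_wpM2r (exprn_ge0 _ x0) Ux) _.
rewrite mulr_natl -sumr_const.
apply: le_trans (ler_sum _ Hv) _.
rewrite -natr_sum ler_nat big_mkcond /=.
apply: (@leq_trans (\sum_v ((l + r)`! * deg E [set v]))%N).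
  by apply: leq_sum => v _; case: (v \in U).
by rewrite -big_distrr /= (@sum_deg1 T E _ kE) addSn mulnCA mulnA.
Qed.
Theorem lemma2p1 (R : realType) (T : finType) (E : {set {set T}})
  (k l : nat) (gamma : R) :
  (l < k)%N -> 0 <= gamma -> is_kgraph k E -> E != set0 ->
  gamma * (#|T|%:R ^+ (k - l)) / ((k - l)`!)%:R <= (minposdeg l E)%:R ->
  powR gamma (k%:R / (k - l)%:R) * (#|T|%:R ^+ k) / (k`!)%:R <= #|E|%:R.
Proof.
move=> lk g0 kE En0 hd.
set r := (k - l)%N; have r0 : (0 < r)%N by rewrite subn_gt0.
have kr : k = (l + r)%N by rewrite subnKC // ltnW.
set m : R := #|T|%:R.
set y := powR gamma (r%:R^-1).
have y0 : 0 <= y by apply: powR_ge0.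
have yr : y ^+ r = gamma.
  by rewrite -powR_mulrn // -powRrM mulVf ?pnatr_eq0 -?lt0n // powRr1.
have m0 : 0 <= m by [].
have x0 : 0 <= y * m by rewrite mulr_ge0.
have hx : (y * m) ^+ r <= (r`! * minposdeg l E)%:R.
  rewrite exprMn yr natrM mulrC; move: hd; rewrite ler_pdivrMr ?ltr0n ?fact_gt0 // => h.
  by rewrite (mulrC (m ^+ r)) (mulrC (r`!%:R)); exact: h.
have := @core R T r (minposdeg l E) (y * m) r0 x0 hx l E.
rewrite -kr => /(_ kE En0 (fun S cS => @minposdeg_spec T l E S cS)) H.
rewrite ler_pdivrMr ?ltr0n ?fact_gt0 //.
have -> : powR gamma (k%:R / r%:R) = y ^+ k.
  by rewrite /y mulrC powRrM powR_mulrn.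
by rewrite -exprMn -natrM mulnC.
Qed.
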